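(* Let $H=(V,E)$ be a hypergraph, let $e_1\in E$ and let $e_2\subsetneq e_1$ with $e_2\notin E$ and $|e_2|>1$. Define $H'=(V,E\cup\{e_2\})$. Then the projection $\operatorname{proj}_{\mathcal{J}^H}$ restricted to $\mathrm{MC}^{H'}$ is a linear isomorphism onto $\mathrm{MC}^H$, and \[\mathrm{MC}^{H'}=\Big\{w\in\mathbb{R}^{\mathcal{J}^{H'}}\ \Big|\ \operatorname{proj}_{\mathcal{J}^H}w\in\mathrm{MC}^H;\ w_J=\sum_{J'\in\mathcal{J}^{e_1}:\, J'\supseteq J} w_{J'}\ \ \forall J\in\mathcal{J}^{e_2}\Big\}.\]
   Context: Let $n$ be a positive integer, $[n]=\{1,\dots,n\}$. A hypergraph $H=(V,E)$ here has as vertex set $V$ a family of pairwise disjoint subsets of $[n]$, each of cardinality at least $2$, and hyperedge set $E$ consisting of subsets $e\subseteq V$ with $|e|\ge 2$. Write $L(V)=\{\{I\}: I\in V\}$. For a nonempty $e\subseteq V$, $\mathcal{J}^e$ denotes the family of sets $J\subseteq \bigcup_{I\in e} I$ with $|J\cap I|=1$ for every $I\in e$. Let $\mathcal{J}^H=\bigcup_{e\in L(V)\cup E}\mathcal{J}^e$. For $w\in\mathbb{R}^{\mathcal{J}^H}$ write $w_i=w_{\{i\}}$ and $w(A)=\sum_{i\in A}w_i$. Let $\mathscr{S}^H=\{w\in\{0,1\}^{\mathcal{J}^H}: w(I)=1\ \forall I\in V;\ w_J=\prod_{i\in J}w_i\ \forall J\in\mathcal{J}^H, |J|>1\}$ and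 $\mathrm{MC}^H=\operatorname{conv}\mathscr{S}^H$. $\operatorname{proj}_{S'}$ extracts the coordinates indexed by $S'$. *)

(* Defs.v *)
From HB Require Import structures.
From mathcomp Require Import all_boot all_order all_algebra.
From mathcomp Require Import reals.
Set Implicit Arguments. Unset Strict Implicit. Unset Printing Implicit Defensive.
Import Order.TTheory GRing.Theory Num.Theory.
Local Open Scope ring_scope.

(* Ground set [n] is represented by 'I_n (elements 0..n-1).
   Vertices are subsets of [n]; a hypergraph is (V, E) with
   V : {set {set 'I_n}} and E : {set {set {set 'I_n}}}. *)

Definition is_hypergraph (n : nat) (V : {set {set 'I_n}})
    (E : {set {set {set 'I_n}}}) : Prop :=
  [/\ (forall I1 I2, I1 \in V -> I2 \in V -> I1 != I2 -> [disjoint I1 & I2]),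
      (forall I, I \in V -> (2 <= #|I|)%N) &
      (forall e, e \in E -> e \subset V /\ (2 <= #|e|)%N)].

Definition Lset (n : nat) (V : {set {set 'I_n}}) : {set {set {set 'I_n}}} :=
  [set [set I] | I in V].

Definition Jset (n : nat) (e : {set {set 'I_n}}) : {set {set 'I_n}} :=
  [set J : {set 'I_n} | (J \subset \bigcup_(I in e) I)
                        && [forall I in e, #|J :&: I| == 1%N]].

Definition JH (n : nat) (V : {set {set 'I_n}}) (E : {set {set {set 'I_n}}})
  : {set {set 'I_n}} :=
  \bigcup_(e in Lset V :|: E) Jset e.

(* A vector of R^S (S a family of subsets of [n]) is represented as a
   function {set 'I_n} -> R vanishing outside S. *)
Definition supported (R : realType) (n : nat) (S : {set {set 'I_n}})
    (w : {set 'I_n} -> R) : Prop :=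
  forall J, J \notin S -> w J = 0.

Definition proj (R : realType) (n : nat) (S : {set {set 'I_n}})
    (w : {set 'I_n} -> R) : {set 'I_n} -> R :=
  fun J => if J \in S then w J else 0.

Definition wpt (R : realType) (n : nat) (w : {set 'I_n} -> R) (i : 'I_n) : R :=
  w [set i].
Definition wsum (R : realType) (n : nat) (w : {set 'I_n} -> R) (A : {set 'I_n}) : R :=
  \sum_(i in A) wpt w i.

Definition SH (R : realType) (n : nat) (V : {set {set 'I_n}})
    (E : {set {set {set 'I_n}}}) (w : {set 'I_n} -> R) : Prop :=
  [/\ supported (JH V E) w,
      (forall J, J \in JH V E -> w J = 0 \/ w J = 1),
      (forall I, I \in V -> wsum w I = 1) &
      (forall J, J \in JH V E -> (1 < #|J|)%N -> w J = \prod_(i in J) wpt w i)].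

Definition conv (R : realType) (T : Type) (P : (T -> R) -> Prop) (w : T -> R) : Prop :=
  exists (k : nat) (p : 'I_k -> T -> R) (l : 'I_k -> R),
    [/\ (forall i, P (p i)), (forall i, 0 <= l i), \sum_(i < k) l i = 1 &
        forall x, w x = \sum_(i < k) l i * p i x].

Definition MC (R : realType) (n : nat) (V : {set {set 'I_n}})
    (E : {set {set {set 'I_n}}}) : ({set 'I_n} -> R) -> Prop :=
  conv (SH V E).

(* Main.v *)
Require Import Defs.
From HB Require Import structures.
From mathcomp Require Import all_boot all_order all_algebra.
From mathcomp Require Import reals boolp.
Import Order.TTheory GRing.Theory Num.Theory.
Local Open Scope ring_scope.
Set Implicit Arguments. Unset Strict Implicit.

Definition lin (R : realType) (T : Type) (f : (T -> R) -> (T -> R)) : Prop :=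
  forall k (l : 'I_k -> R) (p : 'I_k -> T -> R),
    f (fun x => \sum_(i < k) l i * p i x) = fun x => \sum_(i < k) l i * f (p i) x.

Lemma conv_map (R : realType) (T : Type) (f : (T -> R) -> (T -> R))
   (P Q : (T -> R) -> Prop) w :
  lin f -> (forall u, P u -> Q (f u)) -> conv P w -> conv Q (f w).
Proof.
move=> hf hPQ [k [p [l [hp hl hs hw]]]].
have -> : w = fun x => \sum_(i < k) l i * p i x by apply: funext.
rewrite hf; exists k, (fun i => f (p i)), l; split => // i; exact: hPQ.
Qed.

Lemma conv_eq (R : realType) (T : Type) (f g : (T -> R) -> (T -> R))
   (P : (T -> R) -> Prop) w :
  lin f -> lin g -> (forall u, P u -> f u = g u) -> conv P w -> f w = g w.
Proof.
move=> hf hg hPQ [k [p [l [hp hl hs hw]]]].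
have -> : w = fun x => \sum_(i < k) l i * p i x by apply: funext.
rewrite hf hg; apply: funext => x; apply: eq_bigr => i _; by rewrite hPQ.
Qed.

Lemma lin_id (R : realType) (T : Type) : lin (fun u : T -> R => u).
Proof. by []. Qed.

Lemma lin_proj (R : realType) n (S : {set {set 'I_n}}) : lin (@proj R n S).
Proof.
move=> k l p; apply: funext => x; rewrite /proj; case: ifP => // _.
by rewrite big1 // => i _; rewrite mulr0.
Qed.

Definition ext (R : realType) n (e1 e2 : {set {set 'I_n}}) (u : {set 'I_n} -> R)
  : {set 'I_n} -> R :=
  fun J => if J \in Jset e2 then \sum_(J' in Jset e1 | J \subset J') u J' else u J.

Lemma lin_ext (R : realType) n (e1 e2 : {set {set 'I_n}}) : lin (@ext R n e1 e2).
Proof.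
move=> k l p; apply: funext => x; rewrite /ext; case: ifP => // _.
rewrite exchange_big /=; apply: eq_bigr => i _; by rewrite mulr_sumr.
Qed.

Lemma JsetP n (e : {set {set 'I_n}}) (J : {set 'I_n}) :
  J \in Jset e -> J \subset \bigcup_(I in e) I /\ forall I, I \in e -> #|J :&: I| = 1%N.
Proof.
rewrite inE => /andP [h1 /forallP h2]; split => // I hI.
by have := h2 I; rewrite hI => /eqP.
Qed.

Lemma Jset_in n (e : {set {set 'I_n}}) (J : {set 'I_n}) :
  J \subset \bigcup_(I in e) I -> (forall I, I \in e -> #|J :&: I| = 1%N) -> J \in Jset e.
Proof.
move=> h1 h2; rewrite inE h1 /=; apply/forallP => I; apply/implyP => hI.
by rewrite h2.
Qed.

Lemma Jset_cover n (V e : {set {set 'I_n}}) (J : {set 'I_n}) i :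
  e \subset V -> J \in Jset e -> i \in J -> exists2 I, I \in V & i \in I.
Proof.
move=> heV /JsetP [h1 _] hi.
have /bigcupP [I hI hiI] := subsetP h1 i hi.
by exists I => //; apply: (subsetP heV).
Qed.

Lemma prod01 (R : realType) n (p : {set 'I_n} -> R) (A : {set 'I_n}) :
  (forall i, i \in A -> wpt p i = 0 \/ wpt p i = 1) ->
  \prod_(i in A) wpt p i = (A \subset [set i | wpt p i == 1])%:R.
Proof.
move=> h; case: (boolP (A \subset _)) => hA.
  by apply: big1 => i hi; have := subsetP hA i hi; rewrite inE => /eqP.
have [i hi hni] := subsetPn hA.
rewrite (bigD1 i) //=; rewrite inE in hni.
case: (h i hi) => [->|e]; first by rewrite mul0r.
by rewrite e eqxx in hni.
Qed.

Lemma card_S (R : realType) n (p : {set 'I_n} -> R) (I : {set 'I_n}) :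
  (forall i, i \in I -> wpt p i = 0 \/ wpt p i = 1) ->
  wsum p I = 1 -> #|I :&: [set i | wpt p i == 1]| = 1%N.
Proof.
move=> h; set S := [set i | _].
have -> : wsum p I = #|I :&: S|%:R.
  rewrite -sum1_card natr_sum [RHS]big_mkcond /wsum [LHS]big_mkcond /=.
  apply: eq_bigr => i _; rewrite !inE.
  case: (boolP (i \in I)) => hi //=.
  by case: (h i hi) => ->; rewrite ?eqxx //= eq_sym oner_eq0.
by move/eqP; rewrite pnatr_eq1 => /eqP.
Qed.

Lemma keyB (R : realType) n (V e1 e2 : {set {set 'I_n}}) (p : {set 'I_n} -> R) :
  e1 \subset V -> e2 \subset e1 ->
  (forall I i, I \in V -> i \in I -> wpt p i = 0 \/ wpt p i = 1) ->
  (forall I, I \in V -> wsum p I = 1) ->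
  forall J, J \in Jset e2 ->
  \sum_(J' in Jset e1 | J \subset J') \prod_(i in J') wpt p i = \prod_(i in J) wpt p i.
Proof.
move=> h1V h21 h01 hsum J hJ.
set S := [set i | wpt p i == 1].
have h01J : forall (e : {set {set 'I_n}}) (K : {set 'I_n}), e \subset V ->
    K \in Jset e -> forall i, i \in K -> wpt p i = 0 \/ wpt p i = 1.
  move=> e K heV hK i hi; have [I hI hiI] := Jset_cover heV hK hi; exact: h01 hI hiI.
have h2V : e2 \subset V by apply: subset_trans h21 h1V.
rewrite (prod01 (h01J _ _ h2V hJ)).
rewrite [LHS](eq_bigr (fun J' : {set 'I_n} => ((J' \subset S)%:R : R))); last first.
  move=> J' /andP [hJ' _]; exact: prod01 (h01J _ _ h1V hJ').
case: (boolP (J \subset S)) => hJS; last first.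
  apply: big1 => J' /andP [_ hJJ']; case: (boolP (J' \subset S)) => // hJ'S.
  by rewrite (subset_trans hJJ' hJ'S) in hJS.
set T := (\bigcup_(I in e1) I) :&: S.
have hTI : forall I, I \in e1 -> T :&: I = I :&: S.
  move=> I hI; rewrite /T setIAC; congr (_ :&: _); apply/setIidPr.
  exact: bigcup_sup.
have hT : T \in Jset e1.
  apply: Jset_in; first exact: subsetIl.
  move=> I hI; rewrite hTI //; apply: card_S.
    move=> i hi; exact: h01 (subsetP h1V I hI) hi.
  exact: hsum (subsetP h1V I hI).
have hJT : J \subset T.
  rewrite subsetI hJS andbT; have [hJc _] := JsetP hJ.
  apply: subset_trans hJc _; apply/subsetP => i /bigcupP [I hI hiI].
  apply/bigcupP; exists I => //; exact: subsetP h21 I hI.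
rewrite (bigD1 T) /=; last by rewrite hT hJT.
rewrite (_ : T \subset S) ?subsetIr // big1 ?addr0 //.
move=> J' /andP [/andP [hJ' _] hne]; case: (boolP (J' \subset S)) => // hJ'S.
exfalso; move/eqP: hne; apply.
have [hc1 hc2] := JsetP hJ'.
have [_ hT2] := JsetP hT.
have hJ'T : J' \subset T by rewrite subsetI hc1 hJ'S.
apply/eqP; rewrite eqEsubset hJ'T /=.
apply/subsetP => i hi; have := hi; rewrite inE => /andP [/bigcupP [I hI hiI] hiS].
have e : J' :&: I = T :&: I.
  apply/eqP; rewrite eqEcard (hc2 _ hI) (hT2 _ hI) leqnn andbT.
  exact: setSI.
have : i \in T :&: I by rewrite inE hi hiI.
by rewrite -e inE => /andP [].
Qed.

Lemma Lset_sub n (V : {set {set 'I_n}}) (E : {set {set {set 'I_n}}}) (e : {set {set 'I_n}}) :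
  is_hypergraph V E -> e \in Lset V :|: E -> e \subset V.
Proof.
case=> _ _ hE; rewrite inE => /orP [/imsetP [I hI ->] | heE].
  by rewrite sub1set.
by case: (hE e heE).
Qed.

Lemma single_in n (V : {set {set 'I_n}}) (E : {set {set {set 'I_n}}}) (I : {set 'I_n}) i :
  I \in V -> i \in I -> [set i] \in JH V E.
Proof.
move=> hI hi; rewrite /JH; apply/bigcupP; exists [set I].
  by rewrite inE; apply/orP; left; apply/imsetP; exists I.
apply: Jset_in.
  apply/subsetP => x; rewrite inE => /eqP ->; apply/bigcupP; exists I => //.
  by rewrite inE.
move=> I'; rewrite inE => /eqP ->; rewrite (setIidPl _) ?cards1 //.
by rewrite sub1set.
Qed.

Lemma sub_e n (V e f : {set {set 'I_n}}) (J : {set 'I_n}) :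
  (forall I1 I2, I1 \in V -> I2 \in V -> I1 != I2 -> [disjoint I1 & I2]) ->
  e \subset V -> f \subset V -> J \in Jset e -> J \in Jset f -> e \subset f.
Proof.
move=> hdis heV hfV hJe hJf; apply/subsetP => I hI.
have [_ h2] := JsetP hJe.
have : (0 < #|J :&: I|)%N by rewrite h2.
move/card_gt0P => [a]; rewrite inE => /andP [haJ haI].
have [hf1 _] := JsetP hJf.
have /bigcupP [I' hI' haI'] := subsetP hf1 a haJ.
case: (eqVneq I I') => [-> //| hne].
have := hdis I I' (subsetP heV I hI) (subsetP hfV I' hI') hne.
by move/disjointFr => /(_ a haI); rewrite haI'.
Qed.

Lemma disjA n (V : {set {set 'I_n}}) (E : {set {set {set 'I_n}}}) (e2 : {set {set 'I_n}}) (J : {set 'I_n}) :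
  is_hypergraph V E -> e2 \subset V -> e2 \notin E -> (1 < #|e2|)%N ->
  J \in Jset e2 -> J \notin JH V E.
Proof.
move=> hH h2V h2E h2c hJ; apply/negP => /bigcupP [e he hJe].
have heV := Lset_sub hH he.
have [hdis _ _] := hH.
have ee : e = e2.
  by apply/eqP; rewrite eqEsubset (sub_e hdis heV h2V hJe hJ) (sub_e hdis h2V heV hJ hJe).
move: he; rewrite ee inE => /orP [/imsetP [I _ ee2] | ].
  by move: h2c; rewrite ee2 cards1.
by rewrite (negbTE h2E).
Qed.

Lemma JH_E' n (V : {set {set 'I_n}}) (E : {set {set {set 'I_n}}}) (e2 : {set {set 'I_n}}) (J : {set 'I_n}) :
  (J \in JH V (e2 |: E)) = (J \in JH V E) || (J \in Jset e2).
Proof.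
apply/bigcupP/orP => [[e]|[/bigcupP [e he hJ]|hJ]].
- move/setUP => [heL|/setU1P [->|heE]] hJ.
  + by left; apply/bigcupP; exists e => //; apply/setUP; left.
  + by right.
  + by left; apply/bigcupP; exists e => //; apply/setUP; right.
- exists e => //; move/setUP: he => [he|he]; apply/setUP; [by left|right].
  by apply/setU1P; right.
- by exists e2 => //; apply/setUP; right; apply/setU1P; left.
Qed.

Lemma JH_cover n (V : {set {set 'I_n}}) (E : {set {set {set 'I_n}}}) (J : {set 'I_n}) i :
  is_hypergraph V E -> J \in JH V E -> i \in J -> exists2 I, I \in V & i \in I.
Proof.
move=> hH /bigcupP [e he hJ] hi; exact: Jset_cover (Lset_sub hH he) hJ hi.
Qed.

Lemma Jcard n (V e : {set {set 'I_n}}) (J : {set 'I_n}) :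
  (forall I1 I2, I1 \in V -> I2 \in V -> I1 != I2 -> [disjoint I1 & I2]) ->
  e \subset V -> (1 < #|e|)%N -> J \in Jset e -> (1 < #|J|)%N.
Proof.
move=> hdis heV /card_gt1P [I1 [I2 [h1 h2 hne]]] hJ.
have [_ hc] := JsetP hJ.
have : (0 < #|J :&: I1|)%N by rewrite hc.
move/card_gt0P => [a]; rewrite inE => /andP [haJ haI].
have : (0 < #|J :&: I2|)%N by rewrite hc.
move/card_gt0P => [b]; rewrite inE => /andP [hbJ hbI].
apply/card_gt1P; exists a, b; split => //.
apply/eqP => eab; subst b.
have := hdis I1 I2 (subsetP heV _ h1) (subsetP heV _ h2) hne.
by move/disjointFr => /(_ a haI); rewrite hbI.
Qed.

Definition setting n (V : {set {set 'I_n}}) (E : {set {set {set 'I_n}}})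
  (e1 e2 : {set {set 'I_n}}) :=
  [/\ is_hypergraph V E, e1 \in E, e2 \subset e1, e2 \notin E & (1 < #|e2|)%N].

Lemma setting_facts n V E e1 e2 : @setting n V E e1 e2 ->
  [/\ e1 \subset V, e2 \subset V, (1 < #|e1|)%N,
      is_hypergraph V (e2 |: E) &
      forall J', J' \in Jset e1 -> J' \in JH V E].
Proof.
move=> [hH he1 h21 h2E h2c].
have [hdis hV hE] := hH.
have [h1V h1c] := hE e1 he1.
have h2V : e2 \subset V by apply: subset_trans h21 h1V.
split => //.
- split => // e /setU1P [->|he]; last exact: hE.
  by split => //; apply: ltnW.
- move=> J' hJ'; apply/bigcupP; exists e1 => //; apply/setUP; by right.
Qed.

Lemma ext_out (R : realType) n (e1 e2 : {set {set 'I_n}}) (u : {set 'I_n} -> R) x :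
  x \notin Jset e2 -> ext e1 e2 u x = u x.
Proof. by rewrite /ext => /negbTE ->. Qed.

Lemma proj_in (R : realType) n (S : {set {set 'I_n}}) (u : {set 'I_n} -> R) x :
  x \in S -> proj S u x = u x.
Proof. by rewrite /proj => ->. Qed.

Lemma SH_01 (R : realType) n (V : {set {set 'I_n}}) (E : {set {set {set 'I_n}}}) (p : {set 'I_n} -> R) :
  SH V E p -> forall I i, I \in V -> i \in I -> wpt p i = 0 \/ wpt p i = 1.
Proof. by case=> _ h01 _ _ I i hI hi; apply: h01; apply: single_in hI hi. Qed.

Lemma ext_proj (R : realType) n V E e1 e2 (p : {set 'I_n} -> R) :
  @setting n V E e1 e2 -> SH V (e2 |: E) p -> ext e1 e2 (proj (JH V E) p) = p.
Proof.
move=> hS hp; have [hH he1 h21 h2E h2c] := hS.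
have [h1V h2V h1c hH' hJ1] := setting_facts hS.
have [hdis _ _] := hH.
have h01 := SH_01 hp.
case: hp => hsup _ hsum hprod.
apply: funext => x; rewrite /ext; case: ifP => hx.
- rewrite (hprod x); last first.
  + exact: Jcard hdis h2V h2c hx.
  + by rewrite JH_E' hx orbT.
  rewrite -(keyB h1V h21 h01 hsum hx).
  apply: eq_bigr => J' /andP [hJ' _]; rewrite proj_in; last exact: hJ1.
  apply: hprod; last exact: Jcard hdis h1V h1c hJ'.
  by rewrite JH_E' hJ1.
- rewrite /proj; case: ifP => // hxE; symmetry; apply: hsup.
  by rewrite JH_E' hxE hx.
Qed.

Lemma proj_SH (R : realType) n V E e1 e2 (p : {set 'I_n} -> R) :
  @setting n V E e1 e2 -> SH V (e2 |: E) p -> SH V E (proj (JH V E) p).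
Proof.
move=> hS hp; have [hH he1 h21 h2E h2c] := hS.
case: hp => hsup h01 hsum hprod.
split.
- by move=> J hJ; rewrite /proj (negbTE hJ).
- by move=> J hJ; rewrite proj_in //; apply: h01; rewrite JH_E' hJ.
- move=> I hI; rewrite -(hsum I hI); apply: eq_bigr => i hi.
  by rewrite /wpt proj_in //; apply: single_in hI hi.
- move=> J hJ hc; rewrite proj_in // hprod ?JH_E' ?hJ //.
  apply: eq_bigr => i hi; rewrite /wpt proj_in //.
  have [I hI hiI] := JH_cover hH hJ hi; exact: single_in hI hiI.
Qed.

Lemma wpt_ext (R : realType) n V E e1 e2 (u : {set 'I_n} -> R) I i :
  @setting n V E e1 e2 -> I \in V -> i \in I -> wpt (ext e1 e2 u) i = wpt u i.
Proof.
move=> hS hI hi; have [hH _ h21 h2E h2c] := hS.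
have [_ h2V _ _ _] := setting_facts hS.
rewrite /wpt ext_out //; apply/negP => h.
by have := disjA hH h2V h2E h2c h; rewrite (single_in E hI hi).
Qed.

Lemma ext_e2 (R : realType) n V E e1 e2 (p : {set 'I_n} -> R) x :
  @setting n V E e1 e2 -> SH V E p -> x \in Jset e2 ->
  ext e1 e2 p x = \prod_(i in x) wpt p i.
Proof.
move=> hS hp hx; have [hH he1 h21 h2E h2c] := hS.
have [h1V h2V h1c hH' hJ1] := setting_facts hS.
have [hdis _ _] := hH.
have h01 := SH_01 hp.
case: hp => hsup _ hsum hprod.
rewrite /ext hx -(keyB h1V h21 h01 hsum hx).
apply: eq_bigr => J' /andP [hJ' _]; apply: hprod; first exact: hJ1.
exact: Jcard hdis h1V h1c hJ'.
Qed.

Lemma ext_SH (R : realType) n V E e1 e2 (p : {set 'I_n} -> R) :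
  @setting n V E e1 e2 -> SH V E p -> SH V (e2 |: E) (ext e1 e2 p).
Proof.
move=> hS hp; have [hH he1 h21 h2E h2c] := hS.
have [h1V h2V h1c hH' hJ1] := setting_facts hS.
have h01' := SH_01 hp.
have hp' := hp; case: hp' => hsup h01 hsum hprod.
have hE2 : forall x, x \in Jset e2 -> x \notin JH V E.
  by move=> x hx; apply: disjA hH h2V h2E h2c hx.
split.
- move=> J; rewrite JH_E' negb_or => /andP [hJ hJ2].
  by rewrite ext_out // hsup.
- move=> J; rewrite JH_E' => /orP [hJ|hJ2].
  + by rewrite ext_out; [exact: h01 | apply/negP => /hE2; rewrite hJ].
  + rewrite (ext_e2 hS hp hJ2) prod01.
      by case: (_ \subset _); [right|left].
    move=> i hi; have [I hI hiI] := Jset_cover h2V hJ2 hi; exact: h01' hI hiI.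
- move=> I hI; rewrite -(hsum I hI); apply: eq_bigr => i hi.
  exact: wpt_ext hS hI hi.
- move=> J; rewrite JH_E' => /orP [hJ|hJ2] hc.
  + rewrite ext_out; last by apply/negP => /hE2; rewrite hJ.
    rewrite hprod //; apply: eq_bigr => i hi.
    have [I hI hiI] := JH_cover hH hJ hi; symmetry; exact: wpt_ext hS hI hiI.
  + rewrite (ext_e2 hS hp hJ2); apply: eq_bigr => i hi.
    have [I hI hiI] := Jset_cover h2V hJ2 hi; symmetry; exact: wpt_ext hS hI hiI.
Qed.

Lemma proj_ext (R : realType) n V E e1 e2 (u : {set 'I_n} -> R) :
  @setting n V E e1 e2 -> supported (JH V E) u -> proj (JH V E) (ext e1 e2 u) = u.
Proof.
move=> hS hu; have [hH he1 h21 h2E h2c] := hS.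
have [h1V h2V h1c hH' hJ1] := setting_facts hS.
apply: funext => x; rewrite /proj; case: ifP => hx.
  rewrite ext_out //; apply/negP => h; have := disjA hH h2V h2E h2c h.
  by rewrite hx.
by rewrite hu // hx.
Qed.

Lemma lin_comp (R : realType) (T : Type) (f g : (T -> R) -> (T -> R)) :
  lin f -> lin g -> lin (fun u => f (g u)).
Proof. by move=> hf hg k l p; rewrite hg hf. Qed.

Lemma ext_in (R : realType) n (e1 e2 : {set {set 'I_n}}) (u : {set 'I_n} -> R) x :
  x \in Jset e2 -> ext e1 e2 u x = \sum_(J' in Jset e1 | x \subset J') u J'.
Proof. by rewrite /ext => ->. Qed.

Theorem proposition2p3 (R : realType) (n : nat) (V : {set {set 'I_n}})
    (E : {set {set {set 'I_n}}}) (e1 e2 : {set {set 'I_n}}) :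
  (0 < n)%N ->
  is_hypergraph V E ->
  e1 \in E -> e2 \proper e1 -> e2 \notin E -> (1 < #|e2|)%N ->
  let E' := e2 |: E in
  (* proj_{J^H} is linear *)
  (forall (a : R) (w1 w2 : {set 'I_n} -> R),
      proj (JH V E) (fun J => a * w1 J + w2 J)
      = (fun J => a * proj (JH V E) w1 J + proj (JH V E) w2 J)) /\
  (* its restriction to MC^{H'} is a bijection onto MC^H *)
  (forall w : {set 'I_n} -> R, MC V E' w -> MC V E (proj (JH V E) w)) /\
  (forall w1 w2 : {set 'I_n} -> R, MC V E' w1 -> MC V E' w2 ->
      proj (JH V E) w1 = proj (JH V E) w2 -> w1 = w2) /\
  (forall v : {set 'I_n} -> R, MC V E v ->
      exists w, MC V E' w /\ proj (JH V E) w = v) /\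
  (* explicit description of MC^{H'} *)
  (forall w : {set 'I_n} -> R,
      MC V E' w <->
      [/\ supported (JH V E') w,
          MC V E (proj (JH V E) w) &
          forall J, J \in Jset e2 ->
            w J = \sum_(J' in Jset e1 | J \subset J') w J']).
Proof.
move=> hn hH he1 hpr h2E h2c E'.
have h21 := proper_sub hpr.
have hS : setting V E e1 e2 by split.
have [h1V h2V h1c hH' hJ1] := setting_facts hS.
have key : forall w : {set 'I_n} -> R, MC V E' w -> ext e1 e2 (proj (JH V E) w) = w.
  move=> w hw.
  exact: (conv_eq (f := fun u => ext e1 e2 (proj (JH V E) u)) (g := fun u => u)
     (lin_comp (@lin_ext R n e1 e2) (@lin_proj R n (JH V E))) (@lin_id R _)
     (fun u hu => ext_proj hS hu) hw).
have hproj : forall w : {set 'I_n} -> R, MC V E' w -> MC V E (proj (JH V E) w).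
  move=> w hw; apply: conv_map hw; first exact: lin_proj.
  by move=> u hu; apply: proj_SH hS hu.
have hext : forall v : {set 'I_n} -> R, MC V E v -> MC V E' (ext e1 e2 v).
  move=> v hv; apply: conv_map hv; first exact: lin_ext.
  by move=> u hu; apply: ext_SH hS hu.
have hsupv : forall v : {set 'I_n} -> R, MC V E v -> supported (JH V E) v.
  move=> v hv.
  have e : proj (JH V E) v = v.
    have hpt : forall u : {set 'I_n} -> R, SH V E u -> proj (JH V E) u = u.
      move=> u [hsup _ _ _]; apply: funext => x; rewrite /proj.
      by case: ifP => // hx; rewrite hsup // hx.
    exact: (conv_eq (f := proj (JH V E)) (g := fun u => u)
      (@lin_proj R n (JH V E)) (@lin_id R _) hpt hv).
  by move=> x hx; rewrite -e /proj (negbTE hx).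
split.
  move=> a w1 w2; apply: funext => x; rewrite /proj.
  by case: ifP => //; rewrite mulr0 addr0.
split; first exact: hproj.
split.
  by move=> w1 w2 h1 h2 e; rewrite -(key w1 h1) -(key w2 h2) e.
split.
  move=> v hv; exists (ext e1 e2 v); split; first exact: hext.
  exact: proj_ext hS (hsupv v hv).
move=> w; split.
- move=> hw; split.
  + move=> x; rewrite /E' JH_E' negb_or => /andP [hx hx2].
    by rewrite -(key w hw) ext_out // /proj (negbTE hx).
  + exact: hproj.
  + move=> J hJ; rewrite -{1}(key w hw) /ext hJ.
    by apply: eq_bigr => J' /andP [hJ' _]; rewrite proj_in // hJ1.
- case=> hsup hv hid.
  have e : ext e1 e2 (proj (JH V E) w) = w.
    apply: funext => x; case: (boolP (x \in Jset e2)) => hx.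
      rewrite ext_in // hid //; apply: eq_bigr => J' /andP [hJ' _].
      by rewrite proj_in // hJ1.
    rewrite ext_out //.
    rewrite /proj; case: ifP => // hxE; symmetry; apply: hsup.
    by rewrite /E' JH_E' hxE hx.
  by rewrite -e; apply: hext.
Qed.
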